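(* Let $q$ be a prime power, $n, m \in \mathbb{N}$. For every integer $0 \le d < mq^2$, $$\mathrm{rank}_{\mathbb{F}_q} \mathrm{EVAL}^m(\mathcal{V}, W_{d,n}) = |W_{d,n}| = \binom{d+n}{d}.$$
   Context: Work over the field $\mathbb{F} = \mathbb{F}_q(t_1,t_2)$ of rational functions. For $f \in \mathbb{F}[x_1,\dots,x_n]$ and $\mathbf{i} \in \mathbb{Z}_{\ge 0}^n$, the $\mathbf{i}$-th Hasse derivative $f^{(\mathbf{i})}$ is defined by the expansion $f(x+z) = \sum_{\mathbf{j}} f^{(\mathbf{j})}(x) z^{\mathbf{j}}$; the weight of $\mathbf{j}$ is $\mathrm{wt}(\mathbf{j}) = \sum_i j_i$. $W_{d,n}$ is the set of monomials in $x_1,\dots,x_n$ of degree at most $d$. For $S \subset \mathbb{F}^n$ and a set of monomials $W$, $\mathrm{EVAL}^m(S,W)$ is the matrix with columns indexed by $f \in W$, rows indexed by pairs $(x,\mathbf{j}) \in S \times \mathbb{Z}_{\ge 0}^n$ with $\mathrm{wt}(\mathbf{j}) < m$, and $((x,\mathbf{j}),f)$ entry $f^{(\mathbf{j})}(x)$. For a matrix over an extension field of $\mathbb{F}_q$, $\mathrm{rank}_{\mathbb{F}_q}$ is the largest size of a set of columns no nonzero $\mathbb{F}_q$-linear combination of which is zero. $\mathcal{V} = \{u t_1 + v t_2 : u, v \in \mathbb{F}_q^n\} \subseteq \mathbb{F}_q[t_1,t_2]^n$. *)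

(* Defs.v *)
From HB Require Import structures.
From mathcomp Require Import all_boot all_order all_algebra.
From mathcomp Require Import fraction.
From mathcomp Require Import mpoly.
Set Implicit Arguments. Unset Strict Implicit. Unset Printing Implicit Defensive.
Import GRing.Theory.
Local Open Scope ring_scope.

(* The rational function field F_q(t1,t2), realised as the fraction field of
   F_q[t1][t2] = {poly {poly Fq}}.  t1 is the inner variable, t2 the outer. *)
Definition ratfun2 (Fq : finFieldType) : fieldType := {fraction {poly {poly Fq}}}.

Definition iota2 (Fq : finFieldType) (c : Fq) : ratfun2 Fq := tofrac (c%:P%:P).
Definition t1 (Fq : finFieldType) : ratfun2 Fq := tofrac ('X%:P).
Definition t2 (Fq : finFieldType) : ratfun2 Fq := tofrac 'X.

(* Hasse derivatives, via the defining expansion f(x+z) = sum_j f^(j)(x) z^j: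
   hasse_shift f is f(x+z) as a polynomial in z (outer variables) with
   coefficients in K[x] (inner variables); f^(j) is its coefficient at z^j. *)
Definition hasse_shift (K : fieldType) (n : nat) (f : {mpoly K[n]})
  : {mpoly {mpoly K[n]}[n]} :=
  mmap (fun c : K => (c%:MP)%:MP) (fun i : 'I_n => ('X_i)%:MP + 'X_i) f.

Definition hasse (K : fieldType) (n : nat) (f : {mpoly K[n]}) (j : 'X_{1..n})
  : {mpoly K[n]} := (hasse_shift f)@_j.

Definition Vpoint (Fq : finFieldType) (n : nat) (uv : {ffun 'I_n -> Fq} * {ffun 'I_n -> Fq})
  : 'I_n -> ratfun2 Fq :=
  fun i => iota2 (uv.1 i) * t1 Fq + iota2 (uv.2 i) * t2 Fq.

(* EVAL^m(V, W_{d,n}): rows (x, j) with x in V (indexed by (u,v)) and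
   wt(j) = mdeg j < m; columns the monomials 'X_[a] with deg a <= d, i.e.
   a : 'X_{1..n < d.+1}.  Entry ((x,j), f) = f^(j)(x). *)
Definition EVAL (Fq : finFieldType) (n m d : nat)
  (r : ({ffun 'I_n -> Fq} * {ffun 'I_n -> Fq}) * 'X_{1..n < m})
  (a : 'X_{1..n < d.+1}) : ratfun2 Fq :=
  (hasse 'X_[bmnm a] (bmnm r.2)).@[Vpoint r.1].

Definition Fq_indep (Fq : finFieldType) (K : fieldType) (iota : Fq -> K)
  (Row Col : finType) (M : Row -> Col -> K) (S : {set Col}) : bool :=
  [forall c : {ffun Col -> Fq},
     [forall r : Row, \sum_(i in S) iota (c i) * M r i == 0]
       ==> [forall i in S, c i == 0]].

Definition rankFq (Fq : finFieldType) (K : fieldType) (iota : Fq -> K)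
  (Row Col : finType) (M : Row -> Col -> K) : nat :=
  \max_(S : {set Col} | Fq_indep iota M S) #|S|.

(* Main.v *)
Require Import Defs.
From HB Require Import structures.
From mathcomp Require Import all_boot all_order all_algebra.
From mathcomp Require Import fraction.
From mathcomp Require Import mpoly.

Module Helpers.
Set Implicit Arguments. Unset Strict Implicit. Unset Printing Implicit Defensive.
Import GRing.Theory.
Local Open Scope ring_scope.

Lemma XsubC_pow_dvd (K : fieldType) (g : {poly K}) (b : K) (r : nat) :
  (forall l, (l < r)%N -> (g \Po ('X + b%:P))`_l = 0) ->
  ('X - b%:P) ^+ r %| g.
Proof.
move=> H; set h := g \Po ('X + b%:P).
have tk : take_poly r h = 0.
  by apply/polyP=> l; rewrite coef_take_poly coef0; case: ifP => // /H.
have -> : g = h \Po ('X - b%:P) by rewrite comp_polyXaddC_K.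
rewrite -(poly_take_drop r h) tk add0r comp_polyM rmorphXn /= comp_polyX.
exact: dvdp_mull.
Qed.

Lemma univ_mult (K : fieldType) (S : seq K) (r : nat) (g : {poly K}) :
  uniq S ->
  (forall b, b \in S -> forall l, (l < r)%N -> (g \Po ('X + b%:P))`_l = 0) ->
  g = 0 \/ (r * size S < size g)%N.
Proof.
move=> uS H.
have D : (\prod_(b <- S) ('X - b%:P)) ^+ r %| g.
  rewrite -prodrXl; elim: S uS H => [|b S IH] /=.
    by rewrite big_nil dvd1p.
  case/andP=> bS uS H; rewrite big_cons Gauss_dvdp.
    rewrite XsubC_pow_dvd ?IH // => [b' Hb'|l Hl]; apply: H => //.
      by rewrite inE Hb' orbT.
    by rewrite inE eqxx.
  rewrite prodrXl; apply: coprimep_expl; apply: coprimep_expr.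
  rewrite coprimep_sym coprimep_XsubC root_prod_XsubC.
  exact: bS.
have [->|gnz] := eqVneq g 0; first by left.
right; have := dvdp_leq gnz D.
have := size_exp (\prod_(b <- S) ('X - b%:P)) r.
rewrite size_prod_XsubC /= => E.
have P0 : (0 < size ((\prod_(b <- S) ('X - b%:P)) ^+ r))%N.
  rewrite size_poly_gt0 expf_neq0 // -size_poly_gt0 size_prod_XsubC //.
move: E; case: (size _) P0 => // s _ /= ->.
by rewrite mulnC.
Qed.

Section Shift.
Variable K : fieldType.

Definition shift n (a : 'I_n -> K) : {mpoly K[n]} -> {mpoly K[n]} :=
  mmap (@mpolyC n K) (fun i => (a i)%:MP + 'X_i).

HB.instance Definition _ n a := GRing.RMorphism.copy (@shift n a)
   (mmap (@mpolyC n K) (fun i => (a i)%:MP + 'X_i)).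

Lemma hasse_shift_eval n (f : {mpoly K[n]}) j a :
  (hasse f j).@[a] = (shift a f)@_j.
Proof.
rewrite /hasse -mcoeff_map_mpoly; congr (_@__).
rewrite /hasse_shift /shift /mmap raddf_sum /=; apply: eq_bigr => m _.
rewrite rmorphM /=; congr (_ * _).
  by rewrite /map_mpoly mmapC /= mevalC.
rewrite /mmap1 (rmorph_prod (map_mpoly (meval a))); apply: eq_bigr => i _.
rewrite rmorphXn rmorphD /= map_mpolyX.
by rewrite /map_mpoly mmapC /= mevalXU.
Qed.

End Shift.

Notation widen := (widen_ord (leqnSn _)).
Section Ext.
Variable K : fieldType.

Definition lowof n (j : 'I_n.+1) : option 'I_n := insub (val j).
Definition extp n (a : 'I_n -> K) (b : K) : 'I_n.+1 -> K :=
  fun j => if lowof j is Some j' then a j' else b.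
Definition extm n (i : 'X_{1..n}) (l : nat) : 'X_{1..n.+1} :=
  [multinom (if lowof j is Some j' then i j' else l) | j < n.+1].
Definition lowm n (m : 'X_{1..n.+1}) : 'X_{1..n} := [multinom m (widen j) | j < n].

Lemma lowof_widen n (j : 'I_n) : lowof (widen j) = Some j.
Proof. by rewrite /lowof insubT //= => H; congr Some; apply: val_inj. Qed.

Lemma lowof_max n : lowof (@ord_max n) = None.
Proof. by rewrite /lowof insubF //= ltnn. Qed.

Lemma extm_widen n (i : 'X_{1..n}) l j : extm i l (widen j) = i j.
Proof. by rewrite mnmE lowof_widen. Qed.

Lemma extm_max n (i : 'X_{1..n}) l : extm i l ord_max = l.
Proof. by rewrite mnmE lowof_max. Qed.

Lemma extp_widen n (a : 'I_n -> K) b j : extp a b (widen j) = a j.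
Proof. by rewrite /extp lowof_widen. Qed.

Lemma extp_max n (a : 'I_n -> K) b : extp a b ord_max = b.
Proof. by rewrite /extp lowof_max. Qed.

Lemma lowm_extm n (i : 'X_{1..n}) l : lowm (extm i l) = i.
Proof. by apply/mnmP => j; rewrite mnmE extm_widen. Qed.

Lemma ord_split n (j : 'I_n.+1) : (exists j', j = widen j') \/ j = ord_max.
Proof.
case: (ltnP j n) => H.
  by left; exists (Ordinal H); apply: val_inj.
right; apply: val_inj => /=; apply/eqP; rewrite eqn_leq H andbT.
by rewrite -ltnS.
Qed.

Lemma extm_eq n (m : 'X_{1..n.+1}) i l :
  (m == extm i l) = (lowm m == i) && (m ord_max == l).
Proof.
apply/eqP/andP => [->|[/eqP <- /eqP <-]].
  by rewrite lowm_extm extm_max.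
apply/mnmP => j; case: (ord_split j) => [[j' ->]|->].
  by rewrite extm_widen mnmE.
by rewrite extm_max.
Qed.

Lemma mdeg_extm n (i : 'X_{1..n}) l : mdeg (extm i l) = (mdeg i + l)%N.
Proof.
rewrite !mdegE big_ord_recr /= extm_max; congr (_ + _)%N.
by apply: eq_bigr => j _; rewrite extm_widen.
Qed.

Lemma K1 n (p : {mpoly K[n.+1]}) i l : p@_(extm i l) = ((muni p)`_l)@_i.
Proof.
rewrite muniE coef_sum raddf_sum {1}(mpolyE p) raddf_sum /=.
apply: eq_bigr => m _.
rewrite mcoeffZ mcoeffX coefZ coefXn.
have -> : [multinom m (widen i0) | i0 < n] = lowm m by [].
rewrite extm_eq [l == _]eq_sym.
have [E1|ne] := eqVneq (lowm m) i; have [E2|ne2] := eqVneq (m ord_max) l => /=;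
  rewrite ?mulr0n ?mulr1n ?mulr0 ?mulr1 ?mcoeff0 ?mcoeffZ ?mcoeffX //.
- by rewrite E1 eqxx mulr1.
- by rewrite (negbTE ne) mulr0.
Qed.

End Ext.

Section T.
Variable K : fieldType.

Lemma muniXU n (k : 'I_n.+1) :
  muni ('X_k : {mpoly K[n.+1]}) = if lowof k is Some j then ('X_j)%:P else 'X.
Proof.
rewrite muniE msuppX big_seq1 mcoeffX eqxx scale1r.
case: (ord_split k) => [[j ->]|->]; rewrite ?lowof_widen ?lowof_max.
  have -> : [multinom (U_(widen j)%MM : 'X_{1..n.+1}) (widen i) | i < n] = U_(j)%MM.
    apply/mnmP => i; rewrite !mnmE.
    by rewrite -val_eqE /= val_eqE.
  rewrite mnmE.
  have -> : (widen j == ord_max) = false by rewrite -val_eqE /= ltn_eqF.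
  by rewrite expr0 alg_polyC.
have -> : [multinom (U_(ord_max)%MM : 'X_{1..n.+1}) (widen i) | i < n] = 0%MM.
  apply/mnmP => i; rewrite !mnmE.
  by have -> : (ord_max == widen i) = false by rewrite -val_eqE /= gtn_eqF.
by rewrite mnmE eqxx expr1 mpolyX0 scale1r.
Qed.

End T.
Section T2.
Variable K : fieldType.
Lemma shiftZX n (a : 'I_n -> K) c m :
  shift a (c *: 'X_[m]) = c%:MP * mmap1 (fun i => (a i)%:MP + 'X_i) m.
Proof. by rewrite /shift mmapZ mmapX. Qed.

Lemma K2m n (a : 'I_n -> K) b c (m : 'X_{1..n.+1}) :
  muni (shift (extp a b) (c *: 'X_[m])) =
  (map_poly (shift a) (muni (c *: 'X_[m]))) \Po ('X + (b%:MP)%:P).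
Proof.
rewrite shiftZX -mul_mpolyC mpolyXE_id !rmorphM /= muniC map_polyC comp_polyC.
rewrite /mmap1 !rmorph_prod /=.
have -> : shift a c%:MP = c%:MP by rewrite /shift mmapC.
congr (_ * _); rewrite !big_ord_recr /=; congr (_ * _).
  apply: eq_bigr => j _.
  rewrite !rmorphXn /=. rewrite rmorphD /=. rewrite muniC !muniXU lowof_widen extp_widen.
  by rewrite map_polyC /= comp_polyC /shift mmapX mmap1U -polyCD.
rewrite !rmorphXn /= rmorphD /= muniC !muniXU lowof_max extp_max map_polyX.
by rewrite comp_polyX addrC.
Qed.

End T2.
Section T3.
Variable K : fieldType.
Lemma K2 n (a : 'I_n -> K) b (f : {mpoly K[n.+1]}) :
  muni (shift (extp a b) f) = (map_poly (shift a) (muni f)) \Po ('X + (b%:MP)%:P).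
Proof.
rewrite (mpolyE f) (raddf_sum (shift (extp a b))) (raddf_sum (@muni n K)).
rewrite (raddf_sum (@muni n K)) (raddf_sum (map_poly (shift a))).
rewrite (raddf_sum (comp_poly ('X + (b%:MP)%:P))).
apply: eq_bigr => m _; exact: K2m.
Qed.
End T3.
Section T4.
Variable K : fieldType.
Lemma coef_comp_polyN (R : comNzRingType) (p q : {poly R}) N l :
  (size p <= N)%N -> (p \Po q)`_l = \sum_(k < N) p`_k * (q ^+ k)`_l.
Proof.
move=> H; rewrite coef_comp_poly (big_ord_widen N (fun k => p`_k * (q ^+ k)`_l)) //.
rewrite big_mkcond /=; apply: eq_bigr => k _; case: ifP => // /negbT.
by rewrite -leqNgt => Hk; rewrite nth_default // mul0r.
Qed.

Lemma size_map_le (R1 R2 : nzRingType) (f : R1 -> R2) (p : {poly R1}) :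
  (size (map_poly f p) <= size p)%N.
Proof. exact: size_poly. Qed.

Lemma K3 n (P : {poly {mpoly K[n]}}) b l i :
  ((P \Po ('X + (b%:MP)%:P))`_l)@_i =
  ((map_poly (mcoeff i) P) \Po ('X + b%:P))`_l.
Proof.
have qe : 'X + (b%:MP)%:P = map_poly (@mpolyC n K) ('X + b%:P).
  by rewrite rmorphD /= map_polyX map_polyC.
rewrite qe (coef_comp_polyN _ _ (leqnn (size P))).
rewrite (coef_comp_polyN _ _ (size_map_le _ P)) raddf_sum /=.
apply: eq_bigr => k _.
rewrite -rmorphXn coef_map /= mulrC mcoeffCM coef_map /= mulrC.
by [].
Qed.
End T4.

Section Core.
Variable K : fieldType.
Variable S : seq K.
Hypothesis uS : uniq S.

Definition vanish n (f : {mpoly K[n]}) (m : nat) :=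
  forall a : 'I_n -> K, (forall i, a i \in S) ->
  forall j : 'X_{1..n}, (mdeg j < m)%N -> (shift a f)@_j = 0.

Lemma core0 m (f : {mpoly K[0]}) :
  (msize f <= m * size S)%N -> vanish f m -> f = 0.
Proof.
move=> Hs Hv.
have [//|fnz] := eqVneq f 0.
have m0 : (0 < m)%N.
  case: m Hs {Hv} => // ; rewrite mul0n leqn0 msize_poly_eq0.
  by rewrite (negbTE fnz).
have H1 : (msize f <= 1)%N.
  rewrite msizeE; apply/bigmax_leqP_seq => A _ _.
  by rewrite mdegE big_ord0.
have fE := msize1_polyC H1.
have := Hv (fun i => 0) (fun i => match i with @Ordinal _ k hk => False_ind _ (notF hk) end) 0%MM.
rewrite mdeg0 => /(_ m0).
rewrite fE /shift mmapC mcoeffC eqxx mulr1 => H0.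
by rewrite fE H0 raddf0.
Qed.

Lemma muni_eq0 n (f : {mpoly K[n.+1]}) : muni f = 0 -> f = 0.
Proof.
move=> H; apply/mpolyP => m.
have -> : m = extm (lowm m) (m ord_max) by apply/eqP; rewrite extm_eq !eqxx.
by rewrite K1 H coef0 !mcoeff0.
Qed.

Lemma extp_in n (a : 'I_n -> K) b :
  (forall i, a i \in S) -> b \in S -> forall j, extp a b j \in S.
Proof.
move=> Ha Hb j; case: (ord_split j) => [[j' ->]|->].
  by rewrite extp_widen.
by rewrite extp_max.
Qed.

Lemma coreS n :
  (forall m (f : {mpoly K[n]}), (msize f <= m * size S)%N -> vanish f m -> f = 0) ->
  forall m (f : {mpoly K[n.+1]}), (msize f <= m * size S)%N -> vanish f m -> f = 0.
Proof.
move=> IH m f Hs Hv.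
have [//|fnz] := eqVneq f 0; exfalso.
set s := size S.
have s0 : (0 < s)%N.
  move: Hs; rewrite /s; case: (size S) => //; rewrite muln0 leqn0 msize_poly_eq0.
  by rewrite (negbTE fnz).
set F := muni f.
have Fnz : F != 0 by apply/eqP => /muni_eq0 /eqP; rewrite (negbTE fnz).
set t := (size F).-1.
have sF : size F = t.+1 by rewrite /t prednK // size_poly_gt0.
set ft := F`_t.
have ftnz : ft != 0.
  by rewrite /ft -[t]/((size F).-1) -/(lead_coef F) lead_coef_eq0.
have Hdeg : (msize ft <= msize f - t)%N.
  rewrite msizeE; apply/bigmax_leqP_seq => A; rewrite mcoeff_msupp => HA _.
  have : extm A t \in msupp f by rewrite mcoeff_msupp K1.
  move/msize_mdeg_lt; rewrite mdeg_extm => H.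
  by rewrite ltn_subRL addnC.
have := IH (m - t %/ s)%N ft.
have Hs' : (msize ft <= (m - t %/ s) * s)%N.
  apply: (leq_trans Hdeg); rewrite mulnBl.
  apply: (leq_trans (leq_sub2r t Hs)); apply: leq_sub2l.
  exact: leq_trunc_div.
move=> /(_ Hs') H; move/eqP: ftnz; apply; apply: H.
move=> a Ha i Hi; apply/eqP/negPn/negP => Hc.
set g := map_poly (mcoeff i) (map_poly (shift a) F).
have gk k : g`_k = (shift a F`_k)@_i by rewrite /g !coef_map.
have gnz : g != 0.
  apply/eqP => g0; move: (gk t); rewrite g0 coef0 => E.
  by move: Hc; rewrite -/ft -E eqxx.
have sg : (size g <= t.+1)%N.
  by rewrite -sF; apply: (leq_trans (size_map_le _ _)); apply: size_map_le.
have := @univ_mult K S (m - mdeg i)%N g uS.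
case.
- move=> b Hb l Hl.
  rewrite /g -K3 -K2 -K1; apply: Hv; first exact: extp_in.
  by rewrite mdeg_extm -ltn_subRL.
- by move=> /eqP; rewrite (negbTE gnz).
move=> /leq_trans /(_ sg); rewrite ltnS.
have Hr : (t %/ s < m - mdeg i)%N by rewrite ltn_subRL addnC -ltn_subRL.
move=> Hle; have := ltn_ceil t s0.
rewrite ltnNge => /negP; apply.
apply: leq_trans Hle; rewrite leq_mul2r; apply/orP; right; exact: Hr.
Qed.

Lemma core n m (f : {mpoly K[n]}) :
  (msize f <= m * size S)%N -> vanish f m -> f = 0.
Proof.
elim: n m f => [|n IH] m f; first exact: core0.
exact: coreS.
Qed.
End Core.

Local Close Scope ring_scope.
Lemma card_bm_sub n b e : (e <= b)%N ->
  #|[set a : 'X_{1..n < b} | (mdeg a < e)%N]| = #|{: 'X_{1..n < e}}|.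
Proof.
move=> le.
pose w (a : 'X_{1..n < e}) : 'X_{1..n < b} := BMultinom (leq_trans (bmdeg a) le).
have wv a : val (w a) = val a by [].
have winj : injective w by move=> x y E; apply: val_inj; rewrite -!wv E.
rewrite -cardsT -(card_imset [set: 'X_{1..n < e}] winj); apply: eq_card => a; rewrite inE; apply/idP/imsetP => [H|[x _ ->]].
  by exists (BMultinom H) => //; apply: val_inj.
exact: (bmdeg x).
Qed.

Lemma card_bm_split n d :
  #|{: 'X_{1..n.+1 < d.+1}}| =
  (\sum_(k < d.+1) #|[set a : 'X_{1..n < d.+1} | (mdeg a + k < d.+1)%N]|)%N.
Proof.
pose A := [set p : 'X_{1..n < d.+1} * 'I_d.+1 | (mdeg p.1 + p.2 < d.+1)%N].
pose psi (a : 'X_{1..n.+1 < d.+1}) : 'X_{1..n < d.+1} * 'I_d.+1 :=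
  (insubd bm0 (lowm a), inord (a ord_max)).
have dE (a : 'X_{1..n.+1 < d.+1}) : mdeg a = (mdeg (lowm a) + a ord_max)%N.
  have -> : bmnm a = extm (lowm a) (a ord_max) by apply/eqP; rewrite extm_eq !eqxx.
  by rewrite mdeg_extm lowm_extm extm_max.
have l1 (a : 'X_{1..n.+1 < d.+1}) : (mdeg (lowm a) < d.+1)%N.
  by apply: leq_ltn_trans (bmdeg a); rewrite dE leq_addr.
have l2 (a : 'X_{1..n.+1 < d.+1}) : (a ord_max < d.+1)%N.
  by apply: leq_ltn_trans (bmdeg a); rewrite dE leq_addl.
have psi1 a : val (psi a).1 = lowm a.
  by rewrite /= val_insubd (l1 a).
have psi2 a : val (psi a).2 = a ord_max by rewrite /= inordK.
have pinj : injective psi.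
  move=> x y E; apply: val_inj; change (bmnm x = bmnm y); apply/eqP.
  have yE : bmnm y = extm (lowm y) (y ord_max) by apply/eqP; rewrite extm_eq !eqxx.
  rewrite [X in _ == X]yE extm_eq.
  by rewrite -psi1 -psi2 E psi1 psi2 !eqxx.
have -> : #|{: 'X_{1..n.+1 < d.+1}}| = #|A|.
  rewrite -cardsT -(card_imset [set: 'X_{1..n.+1 < d.+1}] pinj).
  apply: eq_card => p; rewrite inE; apply/imsetP/idP => [[x _ ->]|H].
    by rewrite psi1 psi2 -dE bmdeg.
  case: p H => [a k] /= H.
  have H' : (mdeg (extm (val a) (val k)) < d.+1)%N by rewrite mdeg_extm.
  exists (BMultinom H'); first by rewrite inE.
  rewrite [psi _]surjective_pairing; congr (_, _); apply: val_inj.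
    by rewrite psi1 /= lowm_extm.
  by rewrite psi2 /= extm_max.
rewrite -sum1_card big_mkcond /=.
symmetry.
under eq_bigr => k _ do rewrite -sum1_card big_mkcond /=.
rewrite exchange_big pair_bigA /=.
by apply: eq_bigr => [[a k]] _ /=; rewrite !inE.
Qed.

Lemma hockey n d : (\sum_(j < d.+1) 'C(j + n, j))%N = 'C(d + n.+1, d).
Proof.
elim: d => [|d IH]; first by rewrite big_ord1 !bin0.
rewrite big_ord_recr /= IH.
have -> : (d.+1 + n.+1 = (d.+1 + n).+1)%N by rewrite addnS.
rewrite [in RHS]binS addnC; congr (_ + _)%N.
  by rewrite addnS addSn.
Qed.

Lemma card_bm n d : #|{: 'X_{1..n < d.+1}}| = 'C(d + n, d).
Proof.
elim: n d => [|n IH] d.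
  rewrite addn0 binn; apply: (@eq_card1 _ (@bm0 0 d)) => x.
  rewrite !inE; apply/esym/eqP; apply: val_inj; apply/mnmP => -[].
  by [].
rewrite card_bm_split.
rewrite (eq_bigr (fun k : 'I_d.+1 => 'C((d - k) + n, d - k))); last first.
  move=> k _.
  have kd : (k <= d)%N by rewrite -ltnS.
  rewrite -IH -subSn // -(@card_bm_sub n d.+1) ?leq_subr //.
  by apply: eq_card => a; rewrite !inE ltn_subRL addnC.
rewrite (reindex_inj rev_ord_inj) /=.
rewrite (eq_bigr (fun j : 'I_d.+1 => 'C(j + n, j))) ?hockey //.
by move=> j _; rewrite subSS subKn // -ltnS.
Qed.

Local Open Scope ring_scope.
Section Final.
Variable Fq : finFieldType.
Local Notation KK := (ratfun2 Fq).

Definition pt (ce : Fq * Fq) : KK := iota2 ce.1 * t1 Fq + iota2 ce.2 * t2 Fq.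
Definition Tset : seq KK := [seq pt ce | ce <- enum {: Fq * Fq}].

Lemma pt_eq (c e : Fq) :
  pt (c, e) = tofrac ((c%:P * 'X)%:P + e%:P%:P * 'X : {poly {poly Fq}}).
Proof. by rewrite /pt /iota2 /t1 /t2 /= !tofracD !tofracM polyCM tofracM. Qed.

Lemma pt_inj : injective pt.
Proof.
move=> [c e] [c' e'] /eqP; rewrite !pt_eq tofrac_eq => /eqP E.
have E1 := f_equal (fun p : {poly {poly Fq}} => p`_1) E.
have E0 := f_equal (fun p : {poly {poly Fq}} => (p`_0)`_1) E.
move: E1 E0 => /=; rewrite !coefD !coefC !coefCM !coefX /=.
by rewrite coef0 !add0r !mulr1 !mulr0 !addr0 => /polyC_inj -> ->.
Qed.

Lemma size_Tset : size Tset = (#|Fq| ^ 2)%N.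
Proof. by rewrite size_map -cardE card_prod mulnn. Qed.

Lemma uniq_Tset : uniq Tset.
Proof. by rewrite map_inj_uniq ?enum_uniq //; exact: pt_inj. Qed.

Lemma iota2_inj : injective (@iota2 Fq).
Proof.
by move=> x y /eqP; rewrite /iota2 tofrac_eq => /eqP /polyC_inj /polyC_inj.
Qed.


Lemma Vpoint_in n uv (i : 'I_n) : Vpoint uv i \in Tset.
Proof.
apply/mapP; exists (uv.1 i, uv.2 i); first by rewrite mem_enum.
by [].
Qed.

Lemma Vpoint_surj n (x : 'I_n -> KK) : (forall i, x i \in Tset) ->
  exists uv, forall i, Vpoint uv i = x i.
Proof.
move=> Hx.
have : forall i, exists ce : Fq * Fq, x i = pt ce.
  by move=> i; case/mapP: (Hx i) => ce _ ->; exists ce.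
case/fin_all_exists => ce Hce.
exists ([ffun i => (ce i).1], [ffun i => (ce i).2]) => i.
by rewrite /Vpoint /= !ffunE Hce.
Qed.

Lemma shift_eq (K : fieldType) n (a b : 'I_n -> K) f :
  a =1 b -> shift a f = shift b f.
Proof.
move=> E; rewrite /shift /mmap; apply: eq_bigr => m _; congr (_ * _).
by apply: mmap1_eq => i; rewrite E.
Qed.

Lemma shiftZ (K : fieldType) n (a : 'I_n -> K) c f :
  shift a (c *: f) = c%:MP * shift a f.
Proof. by rewrite /shift mmapZ. Qed.

Lemma main_indep n m d : (d < m * #|Fq| ^ 2)%N ->
  Fq_indep (@iota2 Fq) (@EVAL Fq n m d) setT.
Proof.
move=> Hd.
apply/forallP => c; apply/implyP => /forallP H.
pose f : {mpoly KK[n]} := \sum_(i : 'X_{1..n < d.+1}) iota2 (c i) *: 'X_[bmnm i].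
have fcoef (B : 'X_{1..n}) : f@_B = \sum_(i : 'X_{1..n < d.+1}) iota2 (c i) * (bmnm i == B)%:R.
  by rewrite /f raddf_sum /=; apply: eq_bigr => i _; rewrite mcoeffZ mcoeffX.
have fsize : (msize f <= m * size Tset)%N.
  rewrite size_Tset msizeE; apply/bigmax_leqP_seq => A; rewrite mcoeff_msupp fcoef => HA _.
  apply: leq_trans Hd; rewrite ltnS; rewrite leqNgt; apply/negP => HA2.
  move: HA; rewrite big1 ?eqxx // => i _.
  have -> : (bmnm i == A) = false.
    apply/negP => /eqP Ei; move: (bmdeg i); rewrite Ei ltnS leqNgt.
    by rewrite HA2.
  by rewrite mulr0.
have fv : vanish Tset f m.
  move=> x Hx j Hj.
  case: (Vpoint_surj Hx) => uv Huv.
  rewrite -(shift_eq f Huv).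
  have := H ((uv, BMultinom Hj)); rewrite /EVAL /=.
  move/eqP => <-.
  rewrite /f (raddf_sum (shift (Vpoint uv))) (raddf_sum (mcoeff j)) /=.
  rewrite [RHS](eq_bigl (fun i => true)); last by move=> i; rewrite inE.
  apply: eq_bigr => i _.
  by rewrite shiftZ mcoeffCM hasse_shift_eval.
have f0 := core uniq_Tset fsize fv.
apply/forall_inP => a _.
have := fcoef a; rewrite f0 mcoeff0 (bigD1 a) //= eqxx mulr1 big1 ?addr0.
  move/esym => E; apply/eqP; apply: iota2_inj; rewrite E /iota2.
  by rewrite !polyC0 tofrac0.
by move=> i ne; rewrite -bmeqP (negbTE ne) mulr0.
Qed.
End Final.


End Helpers.
Import Helpers.

Theorem mainTheorem14 (Fq : finFieldType) (n m d : nat) :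
  (d < m * #|Fq| ^ 2)%N ->
  rankFq (@iota2 Fq) (@EVAL Fq n m d) = #|{: 'X_{1..n < d.+1}}|
  /\ #|{: 'X_{1..n < d.+1}}| = 'C(d + n, d).
Proof.
Import GRing.Theory.
move=> Hd; split; last exact: card_bm.
rewrite /rankFq; apply/eqP; rewrite eqn_leq; apply/andP; split.
  by apply/bigmax_leqP => S _; exact: max_card.
have := @leq_bigmax_cond _ _ (fun S : {set 'X_{1..n < d.+1}} => #|S|) _ (@main_indep Fq n m d Hd).
by rewrite cardsT.
Qed.
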